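(* Let $k\in\{1,\dots,n\}$ and let $R$ be a run of an $n$-DPDA, with $|R|\ge1$, that is not $(k-1)$-upper. Suppose that there exists an index $j\in\{0,\dots,|R|-1\}$ such that $R[j,|R|]$ is $k$-upper, and that for the greatest such index $j$ the run $R[0,j]$ is $(k-1)$-upper. Then $R$ is a $k$-return.
   Context: Stacks: fix order $n\ge1$, finite stack alphabet $\Gamma$. A $0$-stack is $(\gamma,x)$ with $\gamma\in\Gamma$, $x=(x_n,\dots,x_1)$ a vector of $n$ positive integers (position). For $k\in\{1,\dots,n\}$ a $k$-stack is a finite list $[s_1,\dots,s_m]$ ($m\ge0$) of nonempty $(k-1)$-stacks such that for some $x_n,\dots,x_{k+1}$, every position in $s_i$ has the form $(x_n,\dots,x_{k+1},i,y_{k-1},\dots,y_1)$. The top is at the right; $s^k:s^{k-1}$ appends at the top (right-associative); for $s^r=t^r:t^{r-1}:\dots:t^k$, $\mathrm{top}^k(s^r)=t^k$. Equality of stacks includes positions. For $k<n$, $\mathsf p_{+1}(s^k)$ adds $1$ to the $(n-k)$-th coordinate of all positions. Operations of order $k\ge1$: $\mathsf{pop}^k(s^r:\dots:s^k:s^{k-1})=s^r:\dots:s^k$, defined only if the topmost $k$-stack has at least two $(k-1)$-stacks; $\mathsf{push}^k_\gamma(s^r:\dots:s^0)=s^r:\dots:s^{k+1}:(s^k:\dots:s^0):\mathsf p_{+1}(s^{k-1}:\dots:s^1:(\gamma,x))$ where $s^0=(\gamma',x)$. An $n$-DPDA has transitions determined by state and topmost stack symbol, each either $\mathrm{read}(\vec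 q)$ ($\vec q:A\to Q$ injective; leads to $(\vec q(a),s)$, reading $a$) or $(q,op)$ with $op$ a stack operation of order $\le n$ (leads to $(q,op(s))$ if defined). Configurations are (state, nonempty $n$-stack). A run is a finite sequence $R=c_0,\dots,c_m$ with each $c_i$ a successor of $c_{i-1}$; $R(i)=c_i$, $|R|=m$, $R[i,j]=c_i,\dots,c_j$. $\mathrm{top}^k(c)$, $\mathsf{pop}^k(c)$ refer to the stack of $c$. History: for a run $R$ and a $0$-stack $s^0$ of $R(|R|)$, $\mathrm{hist}(R,s^0)$ is a $0$-stack of $R(0)$: if $|R|=0$ it is $s^0$; if $R=S\circ T$, $|T|=1$, and the last step is a read or a $\mathsf{pop}$, or a $\mathsf{push}^r_\gamma$ with $s^0$ not in the topmost $(r-1)$-stack of $R(|R|)$, it is $\mathrm{hist}(S,s^0)$; if the last step is $\mathsf{push}^r_\gamma$ and $s^0$ is in the topmost $(r-1)$-stack of $R(|R|)$, it is $\mathrm{hist}(S,t^0)$ with $t^0$ equal to $s^0$ with the $(n-r+1)$-th position coordinate decreased by $1$. For a $k$-stack $s^k$ of $R(|R|)$, $k\ge1$, $\mathrm{hist}(R,s^k)$ is the $k$-stack of $R(0)$ containing $\mathrm{hist}(R,s^0)$ for all $0$-stacks $s^0$ of $s^k$. For $k\in\{0,\dots,n\}$, $R$ is $k$-upper if $\mathrm{hist}(R,\mathrm{top}^k(R(|R|)))=\mathrm{top}^k(R(0))$. For $k\in\{1,\dots,n\}$, $R$ is a $k$-return if $\mathrm{hist}(R,\mathrm{top}^{k-1}(R(|R|)))=\mathrm{top}^{k-1}(\mathsf{pop}^k(R(0)))$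 and $R[i,|R|]$ is not $(k-1)$-upper for every $i\in\{0,\dots,|R|-1\}$. *)

(* Defs.v *)
From mathcomp Require Import all_boot.
From Stdlib Require List.
Set Implicit Arguments.
Unset Strict Implicit.
Unset Printing Implicit Defensive.

(* A stack over alphabet G: a 0-stack is [Leaf g x] with x = [:: x_n; ...; x_1]
   its position; a k-stack (k >= 1) is [Node l], l listed bottom-to-top
   (the top is the last element). The order is recorded by [wfk]. *)
Inductive stk (G : Type) : Type :=
| Leaf of G & seq nat
| Node of seq (stk G).
Arguments Leaf {G}.
Arguments Node {G}.

Inductive op (G : Type) : Type :=
| OPop of nat
| OPush of nat & G.
Arguments OPop {G}.
Arguments OPush {G}.

Inductive trans (Q A G : Type) : Type :=
| TRead of (A -> Q)
| TOp of Q & op G.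
Arguments TRead {Q A G}.
Arguments TOp {Q A G}.

Section HOPDA.
Variable n : nat.
Variable G : Type.

Notation stk := (stk G).
Definition dflt : stk := Node [::].

Definition children (s : stk) : seq stk :=
  match s with Node l => l | Leaf _ _ => [::] end.

Fixpoint pos (s : stk) : seq (seq nat) :=
  match s with
  | Leaf _ x => [:: x]
  | Node l => flatten (map pos l)
  end.

Definition nonempty (s : stk) : Prop :=
  match s with Leaf _ _ => True | Node l => l <> [::] end.

(* [wfk k s] : s is a k-stack (in the sense of the paper, for order n). *)
Fixpoint wfk (k : nat) (s : stk) : Prop :=
  match k, s with
  | 0, Leaf _ x => size x = n /\ all (fun y => 0 < y) x
  | k'.+1, Node l =>
      List.Forall (wfk k') l /\ List.Forall nonempty l /\
      exists p : seq nat, size p = n - k /\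
        forall i, i < size l -> forall x, x \in pos (nth dflt l i) ->
          take (n - k) x = p /\ nth 0 x (n - k) = i.+1
  | _, _ => False
  end.

Fixpoint topd (d : nat) (s : stk) : stk :=
  match d with 0 => s | d'.+1 => topd d' (last dflt (children s)) end.

Definition top (k : nat) (s : stk) : stk := topd (n - k) s.

(* all substacks at depth d; the k-stacks of an n-stack are [subd (n-k) s] *)
Fixpoint subd (d : nat) (s : stk) : seq stk :=
  match d with
  | 0 => [:: s]
  | d'.+1 => flatten (map (subd d') (children s))
  end.

Fixpoint atd (d : nat) (f : stk -> option stk) (s : stk) : option stk :=
  match d with
  | 0 => f s
  | d'.+1 =>
      match s with
      | Node l =>
          if l is [::] then None else
          match atd d' f (last dflt l) with
          | Some c => Some (Node (rcons (take (size l).-1 l) c))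
          | None => None
          end
      | Leaf _ _ => None
      end
  end.

(* p_{+1} acting on coordinate with 0-based index j (of x_n,...,x_1) *)
Fixpoint shift (j : nat) (s : stk) : stk :=
  match s with
  | Leaf g x => Leaf g (incr_nth x j)
  | Node l => Node (map (shift j) l)
  end.

Fixpoint settop (g : G) (s : stk) : stk :=
  match s with
  | Leaf _ x => Leaf g x
  | Node l =>
      Node ((fix ml (l : seq stk) : seq stk :=
               match l with
               | [::] => [::]
               | [:: x] => [:: settop g x]
               | x :: l' => x :: ml l'
               end) l)
  end.

Definition pop_top (s : stk) : option stk :=
  match s with
  | Node l => if 2 <= size l then Some (Node (take (size l).-1 l)) else None
  | Leaf _ _ => None
  end.

Definition push_top (j : nat) (g : G) (s : stk) : option stk :=
  match s with
  | Node l => if l is [::] then None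
              else Some (Node (rcons l (shift j (settop g (last dflt l)))))
  | Leaf _ _ => None
  end.

Definition pop (k : nat) (s : stk) : option stk :=
  if (1 <= k <= n) then atd (n - k) pop_top s else None.

Definition push (k : nat) (g : G) (s : stk) : option stk :=
  if (1 <= k <= n) then atd (n - k) (push_top (n - k) g) s else None.

Definition apply_op (o : op G) (s : stk) : option stk :=
  match o with OPop k => pop k s | OPush k g => push k g s end.

Definition topsym (s : stk) : option G :=
  match top 0 s with Leaf g _ => Some g | Node _ => None end.

Variables Q A : Type.
Variable delta : Q -> G -> trans Q A G.

Definition config := (Q * stk)%type.

Definition succ (c c' : config) : Prop :=
  exists g, topsym c.2 = Some g /\
  match delta c.1 g with
  | TRead f => exists a, c' = (f a, c.2)
  | TOp q o => exists s', apply_op o c.2 = Some s' /\ c' = (q, s')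
  end.

Fixpoint steps (c : config) (l : seq config) : Prop :=
  match l with [::] => True | c' :: l' => succ c c' /\ steps c' l' end.

(* a run R = c_0, ..., c_m (as the list [:: c_0; ...; c_m]); |R| = size R - 1;
   every configuration has a (nonempty) n-stack. *)
Definition is_run (R : seq config) : Prop :=
  match R with
  | [::] => False
  | c :: l => steps c l /\ List.Forall (fun c => wfk n c.2 /\ nonempty c.2) R
  end.

Definition decr (j : nat) (x : seq nat) : seq nat := set_nth 0 x j (nth 0 x j).-1.

(* history of the 0-stack at position x of c' through the step c -> c' *)
Definition step_back (c c' : config) (x : seq nat) : seq nat :=
  match topsym c.2 with
  | Some g =>
      match delta c.1 g with
      | TOp _ (OPush r _) =>
          if x \in pos (top (r - 1) c'.2) then decr (n - r) x else x
      | _ => x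
      end
  | None => x
  end.

Fixpoint histrev (l : seq config) (x : seq nat) : seq nat :=
  match l with
  | c' :: ((c :: _) as l') => histrev l' (step_back c c' x)
  | _ => x
  end.

(* hist(R, s^0) for the 0-stack at position x of R(|R|): a position of R(0) *)
Definition hist0 (R : seq config) (x : seq nat) : seq nat := histrev (rev R) x.

(* [hist_is R k t u] : hist(R, t) = u for a k-stack t of R(|R|), i.e. u is the
   k-stack of R(0) containing hist(R, s^0) for all 0-stacks s^0 of t. *)
Definition hist_is (R : seq config) (k : nat) (t u : stk) : Prop :=
  match R with
  | [::] => False
  | c0 :: _ => List.In u (subd (n - k) c0.2) /\
               forall x, x \in pos t -> hist0 R x \in pos u
  end.

Definition upper (k : nat) (R : seq config) : Prop :=
  match R with
  | [::] => False
  | c0 :: l => hist_is R k (top k (last c0 l).2) (top k c0.2)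
  end.

Definition subrun (R : seq config) (i j : nat) : seq config :=
  take (j - i).+1 (drop i R).

Definition kreturn (k : nat) (R : seq config) : Prop :=
  match R with
  | [::] => False
  | c0 :: l =>
      (exists p, pop k c0.2 = Some p /\
         hist_is R (k - 1) (top (k - 1) (last c0 l).2) (top (k - 1) p)) /\
      forall i, i < size R - 1 -> ~ upper (k - 1) (subrun R i (size R - 1))
  end.


End HOPDA.

(* Main.v *)
Require Import Defs.
From mathcomp Require Import all_boot.
From Stdlib Require List Classical.
From mathcomp Require Import zify.
From Stdlib Require Import Lia.
Set Implicit Arguments. Unset Strict Implicit. Unset Printing Implicit Defensive.

Definition pref (l : nat) (x y : seq nat) := forall i, i < l -> nth 0 x i = nth 0 y i.

Lemma pref_take l x y : l <= size x -> l <= size y -> (take l x = take l y <-> pref l x y).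
Proof.
move=> hx hy; split=> [e i hi|h].
  by rewrite -(nth_take 0 hi x) e nth_take.
apply: (@eq_from_nth _ 0); first by rewrite !size_takel.
move=> i; rewrite size_takel // => hi; rewrite !nth_take //; exact: h.
Qed.

Lemma pref_le l l' x y : l' <= l -> pref l x y -> pref l' x y.
Proof. by move=> hl h i hi; apply: h; apply: leq_trans hl. Qed.

Lemma pref_sym l x y : pref l x y -> pref l y x.
Proof. by move=> h i hi; rewrite h. Qed.

Lemma pref_trans l x y z : pref l x y -> pref l y z -> pref l x z.
Proof. by move=> h1 h2 i hi; rewrite h1 // h2. Qed.

Lemma pref_refl l x : pref l x x.
Proof. by []. Qed.

Lemma prefS l x y : pref l.+1 x y <-> pref l x y /\ nth 0 x l = nth 0 y l.
Proof.
split=> [h|[h1 h2] i]; first by split; [apply: pref_le h|apply: h].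
by rewrite ltnS leq_eqVlt => /orP[/eqP->|/h1].
Qed.

Lemma maxP (P : nat -> Prop) m j0 : j0 < m -> P j0 ->
  exists j, [/\ j < m, P j & forall j', j < j' < m -> ~ P j'].
Proof.
move: {2}(m - j0) (leqnn (m - j0)) => d; elim: d j0 => [|d IH] j0 hd hj0 Pj0.
  by move: hd; rewrite leqn0 subn_eq0 leqNgt hj0.
have [[j' [/andP[h1 h2] Pj']]|no] := Classical_Prop.classic (exists j', j0 < j' < m /\ P j').
  apply: (IH j') => //; lia.
exists j0; split=> // j' hj' Pj'; apply: no; by exists j'.
Qed.
Section Stacks.
Variable n : nat.
Variable G : Type.
Local Notation stk := (stk G).
Local Notation dflt := (dflt G).

Lemma mem_flatten_pos (l : seq stk) x :
  x \in flatten (map (@pos G) l) -> exists2 i, i < size l & x \in pos (nth dflt l i).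
Proof.
elim: l => [|a l IH] //=; rewrite mem_cat => /orP[h|/IH[i hi hx]].
  by exists 0.
by exists i.+1.
Qed.

Lemma mem_flatten_nth (l : seq stk) i x : i < size l -> x \in pos (nth dflt l i) ->
  x \in flatten (map (@pos G) l).
Proof. elim: l i => [|a l IH] [|i] //= hi hx; rewrite mem_cat ?hx //. by rewrite (IH i) ?orbT. Qed.

Lemma In_nth (T : Type) (d : T) (l : seq T) i : i < size l -> List.In (nth d l i) l.
Proof. elim: l i => [|a l IH] [|i] //= hi; [by left | right; exact: IH]. Qed.

Lemma Forall_nth (T : Type) (P : T -> Prop) (d : T) (l : seq T) i :
  List.Forall P l -> i < size l -> P (nth d l i).
Proof. move/List.Forall_forall => h hi; apply: h; exact: In_nth. Qed.

Lemma last_nth' (T : Type) (d : T) (l : seq T) : last d l = nth d l (size l).-1.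
Proof. by rewrite nth_last. Qed.

Lemma ne_size (l : seq stk) : nonempty (Node l) -> 0 < size l.
Proof. by case: l. Qed.

Lemma wf_pos k (s : stk) x : wfk n k s -> x \in pos s -> size x = n /\ all (fun y => 0 < y) x.
Proof.
elim: k s => [|k IH] [g y|l] //=.
  by move=> h; rewrite inE => /eqP->.
move=> [hF [hne _]] /mem_flatten_pos [i hi hx].
exact: (IH (nth dflt l i) (Forall_nth dflt hF hi) hx).
Qed.

Lemma wf_child k (l : seq stk) x : wfk n k.+1 (Node l) -> x \in pos (Node l) ->
  exists2 i, i < size l & x \in pos (nth dflt l i) /\ nth 0 x (n - k.+1) = i.+1.
Proof.
move=> [_ [_ [p [_ H]]]] /mem_flatten_pos [i hi hx].
exists i => //; split => //; by case: (H i hi x hx).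
Qed.

Lemma wf_childE k (l : seq stk) x i : wfk n k.+1 (Node l) -> x \in pos (Node l) -> i < size l ->
  (x \in pos (nth dflt l i)) = (nth 0 x (n - k.+1) == i.+1).
Proof.
move=> hw hx hi; have [i' hi' [hx' e]] := wf_child hw hx.
apply/idP/eqP => [h|h].
  by move: hw => [_ [_ [p [_ H]]]]; case: (H i hi x h).
by move: e; rewrite h => -[e]; rewrite e.
Qed.

Lemma wf_pref0 k (s : stk) x y : k <= n -> wfk n k s -> x \in pos s -> y \in pos s -> pref (n - k) x y.
Proof.
case: k s => [|k] [g z|l] //=.
  by move=> _ _; rewrite !inE => /eqP-> /eqP->.
move=> hk hw hx hy.
have [sx _] := @wf_pos k.+1 (Node l) x hw hx; have [sy _] := @wf_pos k.+1 (Node l) y hw hy.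
move: hw => [_ [_ [p [_ H]]]].
move: hx hy => /mem_flatten_pos [i hi hx] /mem_flatten_pos [j hj hy].
case: (H i hi x hx) => e1 _; case: (H j hj y hy) => e2 _.
apply/pref_take; rewrite ?sx ?sy ?leq_subr //.
by rewrite e1 e2.
Qed.

Lemma topd_add a b (s : stk) : topd (a + b) s = topd b (topd a s).
Proof. by elim: a s => [|a IH] s //=. Qed.

Lemma pos_last (s : stk) : {subset pos (last dflt (children s)) <= pos s}.
Proof.
case: s => [g x|l] /=; first by [].
case/lastP: l => [|l a] //= x; rewrite last_rcons => hx.
rewrite -cats1 map_cat flatten_cat mem_cat /= cats0 hx orbT //.
Qed.

Lemma pos_topd d (s : stk) : {subset pos (topd d s) <= pos s}.
Proof. elim: d s => [|d IH] s x //= /IH; exact: pos_last. Qed.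

Lemma last_In (T : Type) (d : T) (l : seq T) : l <> [::] -> List.In (last d l) l.
Proof. move=> hl; rewrite last_nth'; apply: In_nth; by case: l hl. Qed.

Lemma wf_topd k d (s : stk) : d <= k -> wfk n k s -> nonempty s ->
  wfk n (k - d) (topd d s) /\ nonempty (topd d s).
Proof.
elim: d k s => [|d IH] k s; first by rewrite subn0.
case: k => [|k] //; case: s => [g x|l] //= hd [hF [hne _]] hl.
have hin := last_In dflt hl.
move/List.Forall_forall: hF => /(_ _ hin) hw.
move/List.Forall_forall: hne => /(_ _ hin) hn.
by rewrite subSS; apply: IH.
Qed.

Lemma In_topd k d (s : stk) : d <= k -> wfk n k s -> nonempty s -> List.In (topd d s) (subd d s).
Proof.
elim: d k s => [|d IH] k s; first by left.
case: k => [|k] //; case: s => [g x|l] //= hd [hF [hne _]] hl.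
have hin := last_In dflt hl.
move/List.Forall_forall: (hF) => /(_ _ hin) hw.
move/List.Forall_forall: (hne) => /(_ _ hin) hn.
have H := IH k _ hd hw hn; clear hw hn IH.
move: (last dflt l) hin H => t; elim: l {hF hne hl} => [|a l IHl] //= [<- h|h h'].
  by apply/List.in_app_iff; left.
by apply/List.in_app_iff; right; apply: IHl.
Qed.

Definition tp (s : stk) : seq nat := nth [::] (pos (topd n s)) 0.

Lemma tp_in (s : stk) : wfk n n s -> nonempty s -> tp s \in pos (topd n s).
Proof.
move=> hw hn; have [] := wf_topd (leqnn n) hw hn; rewrite subnn.
by rewrite /tp; case: (topd n s) => [g x|l] //= _ _; rewrite inE.
Qed.

Lemma topd_mem k d (s : stk) z x : k <= n -> d <= k -> wfk n k s -> nonempty s ->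
  z \in pos (topd d s) ->
  (x \in pos (topd d s) <-> x \in pos s /\ pref (n - k + d) x z).
Proof.
elim: d k s z => [|d IH] k s z.
  move=> hk _ hw _ hz /=; rewrite addn0; split=> [hx|[]//]; split=> //.
  exact: wf_pref0 hk hw hx hz.
case: k => [|k] //; case: s => [g y|l] // hk hd hw hl hz.
have hw0 := hw; move: hw => [hF [hne _]].
have hin := last_In dflt hl.
move/List.Forall_forall: (hF) => /(_ _ hin) hwl.
move/List.Forall_forall: (hne) => /(_ _ hin) hnl.
move: hz; rewrite /= => hz.
have hk' : k < n by [].
rewrite (IH k _ z) //; last by apply: ltnW.
have hzl : z \in pos (last dflt l) by apply: pos_topd hz.
have hzN : z \in pos (Node l) by [apply: (@pos_last (Node l))].
have hsl := ne_size hl.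
have eS : n - k = (n - k.+1).+1 by rewrite subnSK.
have eA : n - k.+1 + d.+1 = n - k + d by rewrite eS addnS addSn.
rewrite eA.
split=> [[hx hp]|[hx hp]].
  split; first by apply: (@pos_last (Node l)).
  done.
split=> //.
have hp1 : pref (n - k) x z by apply: pref_le hp; apply: leq_addr.
move: hp1; rewrite eS => /prefS [_ e].
rewrite last_nth' in hzl *.
have hlt : (size l).-1 < size l by rewrite prednK.
have ez : nth 0 z (n - k.+1) = size l.
  by move: hzl; rewrite (wf_childE hw0 hzN hlt) prednK // => /eqP.
by rewrite (wf_childE hw0 hx hlt) prednK // e ez.
Qed.

Lemma top_mem r (s : stk) x : r <= n -> wfk n n s -> nonempty s ->
  (x \in pos (top n r s) <-> x \in pos s /\ pref (n - r) x (tp s)).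
Proof.
move=> hr hw hn; rewrite /top.
have := topd_mem x (leqnn n) (leq_subr r n) hw hn; rewrite subnn add0n; apply.
have e : topd n s = topd r (topd (n - r) s) by rewrite -topd_add subnK.
have := tp_in hw hn; rewrite e; exact: pos_topd.
Qed.

Lemma tp_pos (s : stk) : wfk n n s -> nonempty s -> tp s \in pos s.
Proof. move=> hw hn; exact: pos_topd (tp_in hw hn). Qed.

Lemma top_max r (s : stk) x : 1 <= r <= n -> wfk n n s -> nonempty s -> x \in pos s ->
  pref (n - r) x (tp s) -> nth 0 x (n - r) <= nth 0 (tp s) (n - r).
Proof.
case/andP=> hr1 hr hw hn hx hp.
have := top_mem x hr hw hn; rewrite /top => -[_ /(_ (conj hx hp))] hx'.
have [] := wf_topd (leq_subr r n) hw hn; rewrite subKn //.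
have htp : tp s \in pos (topd r (topd (n - r) s)).
  by rewrite -topd_add subnK //; apply: tp_in.
move: hx' htp; case: (topd (n - r) s) => [g y|l] hx' htp hw' hl.
  by case: r hr1 hr hp hx' htp hw' hl.
case: r hr1 hr hp hx' htp hw' hl => [|r] // _ hr _ hx' htp hw' hl.
have hsl := ne_size hl.
have [i hi [_ e]] := wf_child hw' hx'.
rewrite e.
have hlt : (size l).-1 < size l by rewrite prednK.
have htl : tp s \in pos (nth dflt l (size l).-1).
  move: htp => /=; rewrite -last_nth'; exact: pos_topd.
have htN : tp s \in pos (Node l) by apply: (mem_flatten_nth hlt htl).
by move: htl; rewrite (wf_childE hw' htN hlt) prednK // => /eqP ->.
Qed.

End Stacks.
Section Ops.
Variable n : nat.
Variable G : Type.
Local Notation stk := (stk G).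
Local Notation dflt := (dflt G).

Fixpoint stk_ind' (P : stk -> Prop) (HL : forall g x, P (Leaf g x))
  (HN : forall l, List.Forall P l -> P (Node l)) (s : stk) : P s :=
  match s with
  | Leaf g x => HL g x
  | Node l => HN l ((fix F (l : seq stk) : List.Forall P l :=
       match l with
       | [::] => @List.Forall_nil _ P
       | a :: l' => @List.Forall_cons _ P a l' (stk_ind' HL HN a) (F l')
       end) l)
  end.

Lemma pos_shift j (s : stk) : pos (shift j s) = map (fun x => incr_nth x j) (pos s).
Proof.
elim/stk_ind': s => [g x|l IH] //=.
elim: l IH => [|a l IHl] //= H; inversion H; subst.
by rewrite map_cat H2 IHl.
Qed.

Lemma pos_settop g (s : stk) : pos (settop g s) = pos s.
Proof.
elim/stk_ind': s => [g' x|l IH] //=.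
elim: l IH => [|a l IHl] //= H; inversion H; subst.
case: l IHl H H3 => [|b l] IHl H H3 /=; first by rewrite H2.
by rewrite IHl.
Qed.

Lemma last_shift j (c : seq stk) : last dflt (map (shift j) c) = shift j (last dflt c).
Proof. exact: (last_map (shift j) c dflt). Qed.

Lemma last_ne (T : Type) (x y : T) s : s <> [::] -> last x s = last y s.
Proof. by case: s. Qed.

Lemma last_settop g (s : stk) : last dflt (children (settop g s)) = settop g (last dflt (children s)).
Proof.
case: s => [g' x|l] //=.
elim: l => [|a l IHl] //=.
case: l IHl => [|b l] IHl //=.
rewrite (@last_ne _ a dflt); last by case: l {IHl}.
by rewrite IHl.
Qed.

Lemma children_shift j (s : stk) : children (shift j s) = map (shift j) (children s).
Proof. by case: s. Qed.

Lemma topd_shift j d (s : stk) : topd d (shift j s) = shift j (topd d s).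
Proof. elim: d s => [|d IH] s //=; by rewrite children_shift last_shift IH. Qed.

Lemma topd_settop g d (s : stk) : topd d (settop g s) = settop g (topd d s).
Proof. elim: d s => [|d IH] s //=; by rewrite last_settop IH. Qed.

Lemma pos_rcons (l : seq stk) a : pos (Node (rcons l a)) = pos (Node l) ++ pos a.
Proof. by rewrite /= -cats1 map_cat flatten_cat /= cats0. Qed.

Lemma atd_spec d f (s s' : stk) : atd d f s = Some s' ->
  exists B t', [/\ f (topd d s) = Some t', pos s = B ++ pos (topd d s),
                  pos s' = B ++ pos t' & topd d s' = t'].
Proof.
elim: d s s' => [|d IH] s s' /=.
  by move=> h; exists [::], s'.
case: s => [g x|l] //.
case/lastP: l => [|l a] //.
rewrite -[rcons l a]/(rcons l a).
have -> : (if rcons l a is [::] then None else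
           match atd d f (last dflt (rcons l a)) with
           | Some c => Some (Node (rcons (take (size (rcons l a)).-1 (rcons l a)) c))
           | None => None end) =
          match atd d f a with
          | Some c => Some (Node (rcons l c))
          | None => None end.
  by rewrite last_rcons size_rcons -cats1 take_size_cat //; case: l.
case E: (atd d f a) => [c|] // [<-].
have [B [t' [h1 h2 h3 h4]]] := IH _ _ E.
exists (pos (Node l) ++ B), t'; rewrite /= last_rcons; split => //.
- by rewrite -/(pos (Node (rcons l a))) pos_rcons h2 catA.
- by rewrite -/(pos (Node (rcons l c))) pos_rcons h3 catA.
- by rewrite last_rcons.
Qed.

Lemma atd_some k d f (s : stk) t : d <= k -> wfk n k s -> nonempty s ->
  f (topd d s) = Some t -> exists s', atd d f s = Some s'.
Proof.
elim: d k s => [|d IH] k s; first by move=> _ _ _ /= ->; exists t.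
case: k => [|k] //; case: s => [g x|l] //= hd [hF [hne _]] hl hf.
have hin := last_In dflt hl.
move/List.Forall_forall: (hF) => /(_ _ hin) hw.
move/List.Forall_forall: (hne) => /(_ _ hin) hn.
have [c ->] := IH k _ hd hw hn hf.
by case: l hl {hF hne hin hw hn hf}; [|eexists].
Qed.

Lemma In_flatten (T U : Type) (f : T -> seq U) (l : seq T) y :
  List.In y (flatten (map f l)) <-> exists x, List.In x l /\ List.In y (f x).
Proof.
elim: l => [|a l IH] /=; first by split=> // [[x []]].
rewrite List.in_app_iff IH; split.
  by case=> [h|[x [h1 h2]]]; [exists a; split; [left|]|exists x; split; [right|]].
by case=> x [[<-|h1] h2]; [left|right; exists x].
Qed.

Lemma In_subd_child d (s t c : stk) : List.In t (subd d s) -> List.In c (children t) ->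
  List.In c (subd d.+1 s).
Proof.
elim: d s => [|d IH] s.
  case=> [<-|[]] hc /=; apply/In_flatten; exists c; split=> //; by left.
move=> /= /In_flatten [s1 [h1 h2]] hc; apply/In_flatten; exists s1; split=> //.
exact: IH h2 hc.
Qed.

Lemma nr_eq r : 1 <= r <= n -> n - (r - 1) = (n - r).+1.
Proof. by case/andP=> h1 h2; rewrite subnBA // addn1 subSn. Qed.

Lemma topd1 (s : stk) d : topd d.+1 s = topd 1 (topd d s).
Proof. by rewrite -addn1 topd_add. Qed.

Lemma pop_spec r (s s' : stk) : 1 <= r <= n -> pop n r s = Some s' ->
  exists B l a, [/\ topd (n - r) s = Node (rcons l a), l <> [::],
     pos s = B ++ pos (Node l) ++ pos a, pos s' = B ++ pos (Node l) &
     topd (n - r) s' = Node l].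
Proof.
move=> hr; rewrite /pop hr => /atd_spec [B [t' [h1 h2 h3 h4]]].
move: h1 h2; case: (topd (n - r) s) => [g x|L] //=.
case: (ltnP 1 (size L)) => hL //; case=> et h2; rewrite -et {et} in h3 h4.
case/lastP: L hL h2 h3 h4 => [|l a] // hL h2 h3 h4.
exists B, l, a; rewrite size_rcons /= -cats1 take_size_cat // in h3 h4 *.
split=> //.
- by case: l hL {h2 h3 h4}.
- by rewrite h2 -cats1 map_cat flatten_cat /= cats0.
Qed.

Lemma top_sub r (s : stk) : 1 <= r <= n -> top n (r - 1) s = topd 1 (topd (n - r) s).
Proof. by move=> hr; rewrite /top nr_eq // topd1. Qed.

Section PopFacts.
Variables (r : nat) (s s' : stk).
Hypothesis hr : 1 <= r <= n.
Hypothesis hp : pop n r s = Some s'.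
Hypotheses (hw : wfk n n s) (hn : nonempty s) (hw' : wfk n n s') (hn' : nonempty s').

Lemma popA x : x \in pos s' -> x \in pos s.
Proof.
have [B [l [a [e1 _ e2 e3 _]]]] := pop_spec hr hp.
by rewrite e3 e2 !mem_cat => /orP[->|->]; rewrite ?orbT.
Qed.

Lemma popB x : x \in pos s -> ~ pref (n - r).+1 x (tp n s) -> x \in pos s'.
Proof.
have [B [l [a [e1 _ e2 e3 _]]]] := pop_spec hr hp.
rewrite e2 e3 !mem_cat => /orP[->//|/orP[->|ha]]; rewrite ?orbT // => hnp.
exfalso; apply: hnp.
have hx : x \in pos (top n (r - 1) s) by rewrite top_sub // e1 /= last_rcons.
have hr1 : r - 1 <= n by case/andP: hr => _ h; apply: leq_trans (leq_subr 1 r) h.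
have [_ hpx] := (top_mem x hr1 hw hn).1 hx. by rewrite -nr_eq.
Qed.

Lemma popC : pref (n - r) (tp n s') (tp n s) /\ (nth 0 (tp n s') (n - r)).+1 = nth 0 (tp n s) (n - r).
Proof.
have [B [l [a [e1 hl e2 e3 e4]]]] := pop_spec hr hp.
case/andP: hr => hr1 hr2.
have [] := wf_topd (leq_subr r n) hw hn; rewrite subKn // e1 => hwt _.
have htp : tp n s \in pos (topd n s) by apply: tp_in.
have htp' : tp n s' \in pos (topd n s') by apply: tp_in.
have eT : forall u : stk, topd n u = topd r (topd (n - r) u) by move=> u; rewrite -topd_add subnK.
rewrite (eT s) e1 in htp; rewrite (eT s') e4 in htp'.
have er : r = (r - 1).+1 by rewrite subn1 prednK.
move: hwt htp htp' (hr2); rewrite er; move: (r - 1) => r' hwt htp htp' hr2'.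
move: htp htp' => /= /pos_topd; rewrite last_rcons => htp /pos_topd htp'.
have hsl : 0 < size l by apply: (@ne_size G l hl).
have ia : size l < size (rcons l a) by rewrite size_rcons.
have il : (size l).-1 < size (rcons l a) by rewrite size_rcons ltnS leq_pred.
have htpN : tp n s \in pos (Node (rcons l a)).
  by rewrite pos_rcons mem_cat htp orbT.
have ha : tp n s \in pos (nth dflt (rcons l a) (size l)) by rewrite nth_rcons ltnn eqxx.
have hl' : tp n s' \in pos (nth dflt (rcons l a) (size l).-1).
  have hlt : (size l).-1 < size l by rewrite prednK.
  by rewrite nth_rcons hlt -last_nth'.
have htpN' : tp n s' \in pos (Node (rcons l a)) by apply: mem_flatten_nth il hl'.
split.
  exact: wf_pref0 hr2' hwt htpN' htpN.
move: ha hl'; rewrite (wf_childE hwt htpN ia) (wf_childE hwt htpN' il) => /eqP-> /eqP->.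
by rewrite prednK.
Qed.

Lemma popD x : x \in pos s' -> ~ pref (n - r).+1 x (tp n s).
Proof.
move=> hx /prefS [hp1 e].
have [hc1 hc2] := popC.
have := top_max hr hw' hn' hx (pref_trans hp1 (pref_sym hc1)).
by rewrite e -hc2 ltnn.
Qed.

End PopFacts.

Lemma pop_exists k (s : stk) y : 1 <= k <= n -> wfk n n s -> nonempty s ->
  y \in pos s -> pref (n - k) y (tp n s) -> (nth 0 y (n - k)).+1 = nth 0 (tp n s) (n - k) ->
  exists p, [/\ pop n k s = Some p, List.In (top n (k - 1) p) (subd (n - (k - 1)) s) &
     forall x, x \in pos s -> pref (n - k) x (tp n s) ->
       (nth 0 x (n - k)).+1 = nth 0 (tp n s) (n - k) -> x \in pos (top n (k - 1) p)].
Proof.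
move=> hk hw hn hy hpy ey.
case/andP: (hk) => hk1 hk2.
have [hwt hnt] := wf_topd (leq_subr k n) hw hn; rewrite subKn // in hwt.
have hIn := In_topd (leq_subr k n) hw hn.
have htp : tp n s \in pos (topd k (topd (n - k) s)) by rewrite -topd_add subnK //; apply: tp_in.
have hyt : y \in pos (topd (n - k) s).
  by have := top_mem y hk2 hw hn; rewrite /top => -[_]; apply.
have hmem : forall x, x \in pos s -> pref (n - k) x (tp n s) -> x \in pos (topd (n - k) s).
  by move=> x hx hpx; have := top_mem x hk2 hw hn; rewrite /top => -[_]; apply.
move: hwt hnt htp hyt hIn hmem.
case E: (topd (n - k) s) => [g z|L] hwt hnt htp hyt hIn hmem.
  by case: k hk hk1 hk2 hwt {hpy ey E hIn htp hmem}.
case: k hk hk1 hk2 hwt hpy ey E hIn htp hmem => [|k'] // hk _ hk2 hwt hpy ey E hIn htp hmem.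
have hsl := ne_size hnt.
have hlt : (size L).-1 < size L by rewrite prednK.
move: (htp) => /= /pos_topd; rewrite last_nth' => htl.
have htN : tp n s \in pos (Node L) by apply: mem_flatten_nth hlt htl.
have etp : nth 0 (tp n s) (n - k'.+1) = size L.
  by move: htl; rewrite (wf_childE hwt htN hlt) prednK // => /eqP.
have [i hi [_ ei]] := wf_child hwt hyt.
have hL2 : 1 < size L by rewrite -etp -ey ei.
have [p hp] : exists p, atd (n - k'.+1) (@pop_top G) s = Some p.
  apply: (atd_some (k := n) (t := Node (take (size L).-1 L))) => //; first exact: leq_subr.
  by rewrite E /= hL2.
have hpop : pop n k'.+1 s = Some p by rewrite /pop hk.
have [B [t' [h1 _ _ h4]]] := atd_spec hp.
rewrite E /= hL2 in h1; case: h1 => h1; rewrite -h1 {h1} in h4.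
have etop : top n (k'.+1 - 1) p = nth dflt L (size L).-2.
  rewrite top_sub // h4 /= last_nth' size_takel; last by rewrite leq_pred.
  by rewrite nth_take //; case: (size L) hL2 => [|[|m]].
have hi2 : (size L).-2 < size L by case: (size L) hL2 => [|[|m]].
exists p; split=> //.
  rewrite etop nr_eq //; apply: (In_subd_child hIn) => /=; exact: In_nth.
move=> x hx hpx ex; rewrite etop.
have hxt := hmem x hx hpx.
rewrite (wf_childE hwt hxt hi2).
have ex' : nth 0 x (n - k'.+1) = (size L).-2.+1.
  by apply: succn_inj; rewrite ex etp; case: (size L) hL2 => [|[|m]].
by rewrite ex'.
Qed.

Lemma push_spec r g (s s' : stk) : 1 <= r <= n -> push n r g s = Some s' ->
  exists B l, [/\ topd (n - r) s = Node l, l <> [::], pos s = B ++ pos (Node l),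
     pos s' = B ++ pos (Node l) ++ map (fun x => incr_nth x (n - r)) (pos (last dflt l)) &
     topd (n - r) s' = Node (rcons l (shift (n - r) (settop g (last dflt l))))].
Proof.
move=> hr; rewrite /push hr => /atd_spec [B [t' [h1 h2 h3 h4]]].
move: h1 h2; case: (topd (n - r) s) => [gg x|L] //=.
case: L => [|a L] //; case=> et h2; rewrite -et {et} in h3 h4.
exists B, (a :: L); split=> //.
by rewrite h3 -[a :: rcons L _]/(rcons (a :: L) _) pos_rcons pos_shift pos_settop catA.
Qed.

Section PushFacts.
Variables (r : nat) (g : G) (s s' : stk).
Hypothesis hr : 1 <= r <= n.
Hypothesis hp : push n r g s = Some s'.
Hypotheses (hw : wfk n n s) (hn : nonempty s) (hw' : wfk n n s') (hn' : nonempty s').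

Lemma last_mem l x : topd (n - r) s = Node l ->
  (x \in pos (last dflt l)) <-> (x \in pos s /\ pref (n - r).+1 x (tp n s)).
Proof.
move=> e.
have hr1 : r - 1 <= n by case/andP: hr => _ h; apply: leq_trans (leq_subr 1 r) h.
have := top_mem x hr1 hw hn.
by rewrite top_sub // e nr_eq.
Qed.

Lemma pushA x : x \in pos s -> x \in pos s'.
Proof.
have [B [l [_ _ e2 e3 _]]] := push_spec hr hp.
by rewrite e2 e3 !mem_cat => /orP[->|->]; rewrite ?orbT.
Qed.

Lemma pushB x : x \in pos s -> pref (n - r).+1 x (tp n s) -> incr_nth x (n - r) \in pos s'.
Proof.
have [B [l [e1 _ e2 e3 _]]] := push_spec hr hp.
move=> hx hpx; have hl : x \in pos (last dflt l) by apply/(last_mem _ e1).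
by rewrite e3 !mem_cat (map_f (fun x => incr_nth x (n - r)) hl) ?orbT.
Qed.

Lemma pushD x : x \in pos s' -> x \in pos s \/
  exists2 y, y \in pos s /\ pref (n - r).+1 y (tp n s) & x = incr_nth y (n - r).
Proof.
have [B [l [e1 _ e2 e3 _]]] := push_spec hr hp.
rewrite e3 !mem_cat => /orP[h|/orP[h|/mapP [y hy ->]]].
- by left; rewrite e2 mem_cat h.
- by left; rewrite e2 mem_cat h orbT.
- by right; exists y => //; apply/(last_mem _ e1).
Qed.

Lemma pushC : tp n s' = incr_nth (tp n s) (n - r).
Proof.
have [B [l [e1 hl e2 e3 e4]]] := push_spec hr hp.
case/andP: hr => hr1 hr2.
have eT : forall u : stk, topd n u = topd r (topd (n - r) u) by move=> u; rewrite -topd_add subnK.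
have htp := tp_in hw hn.
rewrite /tp eT e4; rewrite eT e1 in htp; rewrite eT e1.
have er : r = (r - 1).+1 by rewrite subn1 prednK.
move: htp; rewrite er; move: (r - 1) => r' /=.
rewrite last_rcons topd_shift topd_settop pos_shift pos_settop => htp.
by rewrite (nth_map [::]) //; case: (pos _) htp.
Qed.

End PushFacts.

End Ops.
Section Steps.
Variables (n : nat) (G Q A : Type) (delta : Q -> G -> trans Q A G).
Local Notation config := (config G Q).

Lemma nth_decr j (x : seq nat) i : nth 0 (decr j x) i = if i == j then (nth 0 x j).-1 else nth 0 x i.
Proof. by rewrite /decr nth_set_nth. Qed.

Lemma size_decr j (x : seq nat) : j < size x -> size (decr j x) = size x.
Proof. by move=> h; rewrite /decr size_set_nth; apply/maxn_idPr. Qed.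

Lemma decr_incr j (x : seq nat) : j < size x -> decr j (incr_nth x j) = x.
Proof.
move=> h; have hs : size (incr_nth x j) = size x by rewrite size_incr_nth h.
apply: (@eq_from_nth _ 0); first by rewrite size_decr hs.
move=> i _; rewrite nth_decr !nth_incr_nth; case: (eqVneq i j) => [->|ne].
  by rewrite eqxx.
by [].
Qed.

Lemma incr_decr j (x : seq nat) : j < size x -> 0 < nth 0 x j -> incr_nth (decr j x) j = x.
Proof.
move=> h hp; have hs : size (decr j x) = size x by rewrite size_decr.
apply: (@eq_from_nth _ 0); first by rewrite size_incr_nth hs h.
move=> i _; rewrite nth_incr_nth nth_decr; case: (eqVneq i j) => [->|ne].
  by rewrite add1n prednK.
by [].
Qed.

Lemma succ_view (c c' : config) : succ n delta c c' ->
  [\/ c'.2 = c.2 /\ (forall x, step_back n delta c c' x = x),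
      exists r, [/\ 1 <= r <= n, pop n r c.2 = Some c'.2 & forall x, step_back n delta c c' x = x]
    | exists r g, [/\ 1 <= r <= n, push n r g c.2 = Some c'.2 &
         forall x, step_back n delta c c' x =
            if x \in pos (top n (r - 1) c'.2) then decr (n - r) x else x]].
Proof.
move=> [g [hg hd]]; rewrite /step_back hg.
case: (delta c.1 g) hd => [f|q o] hd.
  by case: hd => a ->; constructor 1.
case: hd => s' [ha ->] /=.
case: o ha => [r|r g'] /= ha.
  constructor 2; exists r; move: ha; rewrite /pop; case: ifP => // hr ha; by split.
constructor 3; exists r, g'; move: ha; rewrite /push; case: ifP => // hr ha; by split.
Qed.

Section OneStep.
Variables (c c' : config).
Hypothesis hs : succ n delta c c'.
Hypotheses (hw : wfk n n c.2) (hn : nonempty c.2) (hw' : wfk n n c'.2) (hn' : nonempty c'.2).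
Local Notation s := c.2.
Local Notation s' := c'.2.
Local Notation sb := (step_back n delta c c').

Lemma size_pos (t : stk G) x : wfk n n t -> x \in pos t -> size x = n.
Proof. by move=> h /(wf_pos h) []. Qed.

Lemma posit (t : stk G) x i : wfk n n t -> x \in pos t -> i < n -> 0 < nth 0 x i.
Proof.
move=> h hx hi; have [e /allP a] := wf_pos h hx.
by apply: a; apply: mem_nth; rewrite e.
Qed.

Lemma push_cond r g x : 1 <= r <= n -> push n r g s = Some s' -> x \in pos s' ->
  (x \in pos (top n (r - 1) s')) <-> pref (n - r).+1 x (incr_nth (tp n s) (n - r)).
Proof.
move=> hr hp hx.
have hr1 : r - 1 <= n by case/andP: hr => _ h; apply: leq_trans (leq_subr 1 r) h.
have := top_mem x hr1 hw' hn'; rewrite nr_eq // (pushC hr hp hw hn) => h.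
split; first by case/h.
by move=> hp1; apply/h.
Qed.

Lemma pref_incr l j (x y : seq nat) : l <= j -> pref l (incr_nth x j) y <-> pref l x y.
Proof.
move=> hl; split=> h i hi; rewrite -h // nth_incr_nth.
  suff : (j == i) = false by move->.
  by apply/eqP => e; move: hi; rewrite -e ltnNge hl.
suff : (j == i) = false by move->.
by apply/eqP => e; move: hi; rewrite -e ltnNge hl.
Qed.

Lemma sb_pos x : x \in pos s' -> sb x \in pos s.
Proof.
case: (succ_view hs) => [[e h]|[r [hr hp h]]|[r [g [hr hp h]]]] hx; rewrite h.
- by rewrite -e.
- exact: (@popA n G r c.2 c'.2 hr hp x hx).
have hpc := push_cond hr hp hx.
case/andP: (hr) => hr1 hr2.
case: ifP => hc.
  have hpx := hpc.1 hc.
  case: (pushD hr hp hw hn hx) => [hxs|[y [hy _] ->]].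
    exfalso; move/prefS: hpx => [hpx e].
    have hp0 : pref (n - r) x (tp n s).
      move=> i hi; rewrite hpx // nth_incr_nth (_ : (n - r == i) = false) //.
      by apply/eqP=> ei; move: hi; rewrite ei ltnn.
    have := top_max hr hw hn hxs hp0.
    by rewrite e nth_incr_nth eqxx add1n ltnn.
  have hsy : n - r < size y by rewrite (size_pos hw hy); lia.
  by rewrite decr_incr.
case: (pushD hr hp hw hn hx) => [//|[y [hy hpy] ex]].
exfalso; move/negP: hc; apply; apply/hpc.
rewrite ex => i hi; rewrite !nth_incr_nth hpy //.
Qed.


Lemma sb_pref l x y : l <= n -> x \in pos s' -> y \in pos s' -> pref l x y -> pref l (sb x) (sb y).
Proof.
move=> hl hx hy hxy.
case: (succ_view hs) => [[e h]|[r [hr hp h]]|[r [g [hr hp h]]]]; rewrite !h //.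
have hcx := push_cond hr hp hx; have hcy := push_cond hr hp hy.
move=> i hi.
case: (ltnP (n - r) l) => hrl.
  have ec : (x \in pos (top n (r - 1) s')) = (y \in pos (top n (r - 1) s')).
    apply/idP/idP => h1.
      by apply/hcy; apply: pref_trans (pref_le hrl (pref_sym hxy)) (hcx.1 h1).
    by apply/hcx; apply: pref_trans (pref_le hrl hxy) (hcy.1 h1).
  rewrite ec; case: ifP => _; last exact: hxy.
  rewrite !nth_decr; case: (eqVneq i (n - r)) => [ei|ne]; first by subst i; rewrite hxy.
  by rewrite hxy.
have hne : (i == n - r) = false by apply/eqP => ei; move: hi; rewrite ei ltnNge hrl.
have ag : forall z : seq nat, nth 0 (if z \in pos (top n (r - 1) s') then decr (n - r) z else z) i = nth 0 z i.
  by move=> z; case: ifP => _ //; rewrite nth_decr hne.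
by rewrite !ag hxy.
Qed.

Definition lip k (x y : seq nat) := pref (n - k) x y /\
  (nth 0 y (n - k) = nth 0 x (n - k) \/ nth 0 y (n - k) = (nth 0 x (n - k)).+1).

Lemma sb_lip k x y : 1 <= k <= n -> x \in pos s' -> y \in pos s' -> lip k x y -> lip k (sb x) (sb y).
Proof.
move=> hk hx hy [hxy hnn].
split; first by apply: sb_pref => //; exact: leq_subr.
case: (succ_view hs) => [[e h]|[r [hr hp h]]|[r [g [hr hp h]]]]; rewrite !h //.
have hcx := push_cond hr hp hx; have hcy := push_cond hr hp hy.
have htp' := pushC hr hp hw hn.
case: (eqVneq r k) => [erk|nrk].
  subst r.
  case: ifP => cy; case: ifP => cx; rewrite ?nth_decr ?eqxx.
  - left; have := hcx.1 cx; have := hcy.1 cy => /prefS [_ ->] /prefS [_ ->] //.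
  - case: hnn => ey.
      exfalso; move/negP: cx; apply; apply/hcx; apply/prefS; split.
        exact: pref_trans hxy (pref_le (leqnSn _) (hcy.1 cy)).
      by rewrite -ey; case/prefS: (hcy.1 cy).
    by left; rewrite ey.

  - exfalso; have hpx := hcx.1 cx; case: hnn => ey.
      move/negP: cy; apply; apply/hcy; apply/prefS; split.
        exact: pref_trans (pref_sym hxy) (pref_le (leqnSn _) hpx).
      by rewrite ey; case/prefS: hpx.
    have hpy : pref (n - k) y (tp n s').
      rewrite htp'; exact: pref_trans (pref_sym hxy) (pref_le (leqnSn _) hpx).
    have := top_max hk hw' hn' hy hpy; rewrite ey htp'.
    by case/prefS: hpx => _ <-; rewrite ltnn.
  - by [].
have hne : (n - k == n - r) = false.
  apply/eqP => e; move/eqP: nrk; apply; case/andP: hk => _ hk2; case/andP: hr => _ hr2.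
  by rewrite -(subKn hk2) -(subKn hr2) e.
have ag : forall z : seq nat, nth 0 (if z \in pos (top n (r - 1) s') then decr (n - r) z else z) (n - k) = nth 0 z (n - k).
  by move=> z; case: ifP => _ //; rewrite nth_decr hne.
by rewrite !ag.
Qed.

Definition maxat k (t : stk G) x := forall y, y \in pos t -> pref (n - k) y x ->
  nth 0 y (n - k) <= nth 0 x (n - k).

Lemma sb_max k x : 1 <= k <= n -> x \in pos s' -> maxat k s' x ->
  (~ pref (n - k) x (tp n s') \/ ~ pref (n - k) (sb x) (tp n s)) -> maxat k s (sb x).
Proof.
move=> hk hx hm hdis.
case: (succ_view hs) => [[e h]|[r [hr hp h]]|[r [g [hr hp h]]]]; rewrite !h in hdis *.
- by rewrite -e.
- move=> y hy hyx; apply: hm => //.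
  apply: (@popB n G r c.2 c'.2 hr hp hw hn y hy) => hP.
  case: (leqP r k) => rk.
    have hxt : pref (n - k) x (tp n s).
      apply: pref_trans (pref_sym hyx) (pref_le _ hP); apply: leq_trans (leqnSn _); exact: leq_sub2l.
    have [hc1 _] := popC hr hp hw hn hw' hn'.
    case: hdis => hd; apply: hd; last by [].
    apply: pref_trans hxt (pref_sym (pref_le _ hc1)); exact: leq_sub2l.
  apply: (@popD n G r c.2 c'.2 hr hp hw hn hw' hn' x hx).
  apply: pref_trans (pref_le _ (pref_sym hyx)) hP.
  by case/andP: hk => _ hk2; case/andP: hr => _ hr2; lia.
have hcx := push_cond hr hp hx.
have htp' := pushC hr hp hw hn.
case: ifP hdis => cx hdis; last first.
  by move=> y hy hyx; apply: hm => //; apply: (@pushA n G r g c.2 c'.2 hr hp y hy).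
have hpx := hcx.1 cx.
case: (leqP r k) => rk.
  exfalso; case: hdis => hd; apply: hd.
    rewrite htp'; apply: pref_le hpx; apply: leq_trans (leqnSn _); exact: leq_sub2l.
  move=> i hi; rewrite nth_decr (_ : (i == n - r) = false); last first.
    apply/eqP => ei; move: hi; rewrite ei ltnNge; apply/negP; rewrite negbK; exact: leq_sub2l.
  rewrite hpx; last by apply: leq_trans hi _; apply: leq_trans (leqnSn _); exact: leq_sub2l.
  rewrite nth_incr_nth (_ : (n - r == i) = false) //.
  apply/eqP => ei; move: hi; rewrite -ei ltnNge; apply/negP; rewrite negbK; exact: leq_sub2l.
have hxpos : 0 < nth 0 x (n - r) by apply: (posit hw' hx); case/andP: hk => ? ?; case/andP: hr => ? ?; lia.
have hlt : (n - r).+1 <= n - k by case/andP: hk => ? ?; case/andP: hr => ? ?; lia.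
move=> y hy hyx.
have hyt : pref (n - r).+1 y (tp n s).
  move=> i hi; rewrite hyx ?(leq_trans hi hlt) // nth_decr.
  case: (eqVneq i (n - r)) => [->|ne].
    by rewrite hpx // nth_incr_nth eqxx add1n.
  rewrite hpx // nth_incr_nth (_ : (n - r == i) = false) //.
  by apply/eqP => ei; move/eqP: ne; rewrite ei.
have hy' := @pushB n G r g c.2 c'.2 hr hp hw hn y hy hyt.
have hyx' : pref (n - k) (incr_nth y (n - r)) x.
  move=> i hi; rewrite nth_incr_nth hyx // nth_decr.
  case: (eqVneq i (n - r)) => [->|ne].
    by rewrite add1n prednK.
  by [].
have := hm _ hy' hyx'.
have hne : (n - r == n - k) = false by apply/eqP => e; move: hlt; rewrite e ltnn.
by rewrite nth_incr_nth hne nth_decr eq_sym hne.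
Qed.

Lemma sb_tp k : 1 <= k <= n ->
  [\/ pref (n - k).+1 (sb (tp n s')) (tp n s),
      pref (n - k) (sb (tp n s')) (tp n s) /\ (nth 0 (sb (tp n s')) (n - k)).+1 = nth 0 (tp n s) (n - k)
    | ~ pref (n - k) (sb (tp n s')) (tp n s)].
Proof.
move=> hk.
case: (succ_view hs) => [[e h]|[r [hr hp h]]|[r [g [hr hp h]]]]; rewrite !h.
- by constructor 1; rewrite e.
- have [hc1 hc2] := popC hr hp hw hn hw' hn'.
  case: (ltngtP r k) => rk.
  + constructor 1; apply: pref_le hc1.
    by case/andP: hk => ? ?; case/andP: hr => ? ?; lia.
  + constructor 3 => hP.
    have e : nth 0 (tp n s') (n - r) = nth 0 (tp n s) (n - r).
      by apply: hP; case/andP: hk => ? ?; case/andP: hr => ? ?; lia.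
    move: hc2; rewrite e; lia.
  + by subst r; constructor 2.
have htp' := pushC hr hp hw hn.
have hin : tp n s' \in pos (top n (r - 1) s').
  apply/(push_cond hr hp (tp_pos hw' hn')); by rewrite htp'.
rewrite hin htp' decr_incr; first by constructor 1.
rewrite (size_pos hw (tp_pos hw hn)).
by case/andP: hr => ? ?; lia.
Qed.

End OneStep.
End Steps.
Lemma seq_cons (T : Type) (x0 : T) (s : seq T) : 0 < size s -> s = nth x0 s 0 :: behead s.
Proof. by case: s. Qed.

Section Trace.
Variables (n : nat) (G Q A : Type) (delta : Q -> G -> trans Q A G).
Local Notation config := (config G Q).

Lemma histrev_rcons (L : seq config) (a b : config) x :
  histrev n delta (rcons (rcons L b) a) x = step_back n delta a b (histrev n delta (rcons L b) x).
Proof.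
elim: L x => [|u L IH] x //.
case: L IH => [|v L] IH //=.
by rewrite -IH.
Qed.

Lemma hist0_cons (a b : config) l x :
  hist0 n delta (a :: b :: l) x = step_back n delta a b (hist0 n delta (b :: l) x).
Proof. by rewrite /hist0 !rev_cons histrev_rcons. Qed.

Lemma kreturnE k (R : seq config) c l : R = c :: l ->
  (kreturn n delta k R <->
   ((exists p, pop n k c.2 = Some p /\
       hist_is n delta R (k - 1) (top n (k - 1) (last c l).2) (top n (k - 1) p)) /\
    forall i, i < size R - 1 -> ~ upper n delta (k - 1) (subrun R i (size R - 1)))).
Proof. by move=> ->. Qed.

Lemma hist_isE k (R : seq config) c l t u : R = c :: l ->
  (hist_is n delta R k t u <->
   (List.In u (subd (n - k) c.2) /\ forall x, x \in pos t -> hist0 n delta R x \in pos u)).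
Proof. by move=> ->. Qed.

Variables (R : seq config) (c0 : config).
Hypothesis hwf : forall i, i < size R -> wfk n n (nth c0 R i).2 /\ nonempty (nth c0 R i).2.
Hypothesis hsucc : forall i, i.+1 < size R -> succ n delta (nth c0 R i) (nth c0 R i.+1).
Local Notation S i := (nth c0 R i).2.

Fixpoint H i d x := match d with
  | 0 => x
  | d'.+1 => step_back n delta (nth c0 R i) (nth c0 R i.+1) (H i.+1 d' x) end.

Lemma H_add i a b x : H i (a + b) x = H i a (H (i + a) b x).
Proof. elim: a i => [|a IH] i /=; first by rewrite addn0. by rewrite IH addSnnS. Qed.

Lemma wfS i : i < size R -> wfk n n (S i). Proof. by move/hwf => []. Qed.
Lemma neS i : i < size R -> nonempty (S i). Proof. by move/hwf => []. Qed.

Lemma H_pos i d x : i + d < size R -> x \in pos (S (i + d)) -> H i d x \in pos (S i).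
Proof.
elim: d i => [|d IH] i /=; first by rewrite addn0.
move=> hid hx.
have h1 : i.+1 < size R by apply: leq_ltn_trans hid; rewrite addnS ltnS leq_addr.
have hi : i < size R by apply: ltnW.
apply: (sb_pos (hsucc h1) (wfS hi) (neS hi) (wfS h1) (neS h1)).
by apply: IH; rewrite addSnnS.
Qed.

Lemma H_pref l i d x y : l <= n -> i + d < size R -> x \in pos (S (i + d)) -> y \in pos (S (i + d)) ->
  pref l x y -> pref l (H i d x) (H i d y).
Proof.
move=> hl; elim: d i => [|d IH] i /=; first by [].
move=> hid hx hy hxy.
have h1 : i.+1 < size R by apply: leq_ltn_trans hid; rewrite addnS ltnS leq_addr.
rewrite -addSnnS in hx hy hid.
have hi : i < size R by apply: ltnW.
apply: (sb_pref (hsucc h1) (wfS hi) (neS hi) (wfS h1) (neS h1)) => //.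
- exact: H_pos.
- exact: H_pos.
- exact: IH.
Qed.

Lemma H_lip k i d x y : 1 <= k <= n -> i + d < size R -> x \in pos (S (i + d)) -> y \in pos (S (i + d)) ->
  lip n k x y -> lip n k (H i d x) (H i d y).
Proof.
move=> hk; elim: d i => [|d IH] i /=; first by [].
move=> hid hx hy hxy.
have h1 : i.+1 < size R by apply: leq_ltn_trans hid; rewrite addnS ltnS leq_addr.
rewrite -addSnnS in hx hy hid.
have hi : i < size R by apply: ltnW.
apply: (sb_lip (hsucc h1) (wfS hi) (neS hi) (wfS h1) (neS h1)) => //.
- exact: H_pos.
- exact: H_pos.
- exact: IH.
Qed.

Lemma hist_H i d x : i + d < size R -> hist0 n delta (take d.+1 (drop i R)) x = H i d x.
Proof.
elim: d i => [|d IH] i hid.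
  have hi : i < size R by rewrite addn0 in hid.
  by rewrite (drop_nth c0 hi) /= take0.
have hi : i < size R by apply: leq_ltn_trans hid; apply: leq_addr.
have hi1 : i.+1 < size R by apply: leq_ltn_trans hid; rewrite addnS ltnS leq_addr.
have E : take d.+2 (drop i R) = nth c0 R i :: take d.+1 (drop i.+1 R) by rewrite (drop_nth c0 hi).
have E1 : take d.+1 (drop i.+1 R) = nth c0 R i.+1 :: take d (drop i.+2 R) by rewrite (drop_nth c0 hi1).
rewrite E E1 hist0_cons -E1 IH //.
by rewrite addSnnS.
Qed.

Lemma last_sub i e : i <= e < size R ->
  last (nth c0 R i) (take (e - i) (drop i.+1 R)) = nth c0 R e.
Proof.
case/andP=> hie heR.
rewrite (last_nth c0) size_takel; last by rewrite size_drop; lia.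
have [d ->] : exists d, e = i + d by exists (e - i); rewrite subnKC.
rewrite addKn; case: d {hie heR} => [|d] /=; first by rewrite addn0.
by rewrite nth_take // nth_drop addSnnS.
Qed.

Lemma upper_sub k i e : i <= e < size R ->
  (upper n delta k (subrun R i e) <->
   (List.In (top n k (S i)) (subd (n - k) (S i)) /\
    forall x, x \in pos (top n k (S e)) -> H i (e - i) x \in pos (top n k (S i)))).
Proof.
case/andP=> hie heR.
have hi : i < size R by apply: leq_ltn_trans heR.
have E : subrun R i e = nth c0 R i :: take (e - i) (drop i.+1 R).
  by rewrite /subrun (drop_nth c0 hi).
rewrite E /= last_sub ?hie //.
split=> -[h1 h2]; split=> // x hx.
  by rewrite -hist_H ?subnKC // -[take _ (drop i R)]/(subrun R i e) E; apply: h2.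
by move: (h2 x hx); rewrite -hist_H ?subnKC // -[take _ (drop i R)]/(subrun R i e) E.
Qed.

Lemma upper_iff k i e : k <= n -> i <= e < size R ->
  (upper n delta k (subrun R i e) <->
   pref (n - k) (H i (e - i) (tp n (S e))) (tp n (S i))).
Proof.
move=> hk hie; rewrite (upper_sub k hie).
case/andP: hie => hie heR.
have hi : i < size R by apply: leq_ltn_trans heR.
have hw := wfS hi; have hn := neS hi; have hwe := wfS heR; have hne := neS heR.
have eie : i + (e - i) = e by rewrite subnKC.
split=> [[_ h]|h].
  have ht : tp n (S e) \in pos (top n k (S e)).
    apply/(top_mem _ hk hwe hne); split; [exact: tp_pos | exact: pref_refl].
  by have [] := (top_mem _ hk hw hn).1 (h _ ht).
split; first by apply: (In_topd (leq_subr k n) hw hn).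
move=> x /(top_mem _ hk hwe hne) [hx hpx].
apply/(top_mem _ hk hw hn); split.
  by apply: H_pos; rewrite eie.
apply: pref_trans h; apply: H_pref; rewrite ?eie ?leq_subr //.
exact: tp_pos.
Qed.

Theorem core k : 1 <= k <= n -> 1 <= size R - 1 ->
  ~ upper n delta (k - 1) R ->
  (exists j, j < size R - 1 /\ upper n delta k (subrun R j (size R - 1))) ->
  (forall j, j < size R - 1 -> upper n delta k (subrun R j (size R - 1)) ->
      (forall j', j < j' < size R - 1 -> ~ upper n delta k (subrun R j' (size R - 1))) ->
      upper n delta (k - 1) (subrun R 0 j)) ->
  kreturn n delta k R.
Proof.
move=> hk hlen Hnot [j0 [hj0 Uj0]] Hgreat.
have hR0 : 0 < size R by lia.
have eRc := seq_cons c0 hR0.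
apply/(kreturnE k eRc).
have hRm : size R - 1 < size R by lia.
move: hlen hj0 Uj0 Hgreat hRm; move Em : (size R - 1) => m hlen hj0 Uj0 Hgreat hmR.
have ek1 : n - (k - 1) = (n - k).+1 by apply: nr_eq.
have hk1n : k - 1 <= n by case/andP: hk => ? ?; lia.
have hkn : k <= n by case/andP: hk.
have hnk : (n - k).+1 <= n by case/andP: hk => ? ?; lia.
have Sw : forall i, i <= m -> wfk n n (S i) by move=> i hi; apply: wfS; apply: leq_ltn_trans hmR.
have Sn : forall i, i <= m -> nonempty (S i) by move=> i hi; apply: neS; apply: leq_ltn_trans hmR.
pose X i := H i (m - i) (tp n (S m)).
have XH : forall i e, i <= e <= m -> X i = H i (e - i) (X e).
  move=> i e /andP [h1 h2]; rewrite /X.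
  have -> : m - i = (e - i) + (m - e) by lia.
  by rewrite H_add subnKC.
have Xpos : forall i, i <= m -> X i \in pos (S i).
  move=> i hi; apply: H_pos; rewrite subnKC //; exact: tp_pos (Sw m (leqnn m)) (Sn m (leqnn m)).
have Xm : X m = tp n (S m) by rewrite /X subnn.
have Xstep : forall i, i < m -> X i = step_back n delta (nth c0 R i) (nth c0 R i.+1) (X i.+1).
  by move=> i hi; rewrite (XH i i.+1) ?subSnn //= leqnSn.
have Uk : forall i, i <= m -> (upper n delta k (subrun R i m) <-> pref (n - k) (X i) (tp n (S i))).
  by move=> i hi; apply: upper_iff => //; rewrite hi.
have Uk1 : forall i, i <= m -> (upper n delta (k - 1) (subrun R i m) <-> pref (n - k).+1 (X i) (tp n (S i))).
  by move=> i hi; rewrite -ek1; apply: upper_iff => //; rewrite hi.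
have NU : ~ pref (n - k).+1 (X 0) (tp n (S 0)).
  move=> h; apply: Hnot.
  have eR : subrun R 0 m = R by rewrite /subrun drop0 subn0 take_oversize //; lia.
  by rewrite -eR; apply/(Uk1 0).
have [j [hj Uj Gj]] := maxP (P := fun j => upper n delta k (subrun R j m)) hj0 Uj0.
have U0j := Hgreat j hj Uj Gj.
have W0 : pref (n - k).+1 (H 0 j (tp n (S j))) (tp n (S 0)).
  have h0j : 0 <= j < size R by rewrite leq0n /=; exact: ltn_trans hj hmR.
  by move: U0j; rewrite (upper_iff hk1n h0j) subn0 ek1.
have Ujp : pref (n - k) (X j) (tp n (S j)) by apply/(Uk j (ltnW hj)).
have fin : pref (n - k).+1 (X j) (tp n (S j)) -> False.
  move=> h; apply: NU.
  have e0 : X 0 = H 0 j (X j) by rewrite (XH 0 j) ?subn0 // leq0n ltnW.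
  rewrite e0; apply: pref_trans W0; apply: H_pref => //; rewrite add0n.
  - exact: ltn_trans hj hmR.
  - exact: Xpos (ltnW hj).
  - exact: tp_pos (Sw j (ltnW hj)) (Sn j (ltnW hj)).
case: (ltnP j.+1 m) => hjm.
  exfalso; apply: fin.
  have hout : forall i, j < i < m -> ~ pref (n - k) (X i) (tp n (S i)).
    move=> i hi hp; have him : i <= m by case/andP: hi => _ /ltnW.
    by apply: (Gj i hi); apply/(Uk i him).
  have step_max : forall q, q < m -> maxat n k (S q.+1) (X q.+1) ->
      (~ pref (n - k) (X q.+1) (tp n (S q.+1)) \/ ~ pref (n - k) (X q) (tp n (S q))) ->
      maxat n k (S q) (X q).
    move=> q hq hm0 hd; rewrite (Xstep q hq) in hd *.
    have hs : q.+1 < size R by apply: leq_ltn_trans hmR.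
    apply: (sb_max (hsucc hs) (Sw q (ltnW hq)) (Sn q (ltnW hq)) (Sw q.+1 hq) (Sn q.+1 hq)) => //.
    exact: Xpos.
  have claim : forall t, t <= m - j -> maxat n k (S (m - t)) (X (m - t)).
    elim=> [|t IH] ht.
      rewrite subn0 Xm => y hy hpy; exact: top_max hk (Sw m (leqnn m)) (Sn m (leqnn m)) hy hpy.
    have hi : m - t.+1 < m by lia.
    have e1 : (m - t.+1).+1 = m - t by lia.
    apply: step_max => //.
      rewrite e1; apply: IH; lia.
    case: (ltnP j (m - t.+1)) => hji.
      right; apply: hout; lia.
    left; rewrite e1; apply: hout; lia.
  have := claim (m - j) (leqnn _); rewrite subKn ?(ltnW hj) // => hmj.
  apply/prefS; split => //; apply/eqP; rewrite eqn_leq; apply/andP; split.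
    exact: top_max hk (Sw j (ltnW hj)) (Sn j (ltnW hj)) (Xpos j (ltnW hj)) Ujp.
  apply: hmj (pref_sym Ujp); exact: tp_pos (Sw j (ltnW hj)) (Sn j (ltnW hj)).
have ej : j.+1 = m by apply/eqP; rewrite eqn_leq hj hjm.
have hjm' : j < m by [].
have Xj1 : X j.+1 = tp n (S j.+1) by rewrite ej Xm.
have Xj_eq : X j = step_back n delta (nth c0 R j) (nth c0 R j.+1) (tp n (S j.+1)).
  by rewrite (Xstep j hj) Xj1.
have hs : j.+1 < size R by rewrite ej.
have hjj : j <= m by apply: ltnW.
case: (sb_tp (hsucc hs) (Sw j hjj) (Sn j hjj) (Sw j.+1 hj) (Sn j.+1 hj) hk); rewrite -Xj_eq.
- by move/fin.
- move=> [hpXj hnXj].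
  pose W i := H i (j - i) (tp n (S j)).
  have Wpos : forall i, i <= j -> W i \in pos (S i).
    move=> i hi; apply: H_pos; rewrite subnKC //; last exact: tp_pos (Sw j hjj) (Sn j hjj).
    exact: leq_ltn_trans hjj hmR.
  have lipi : forall i, i <= j -> lip n k (X i) (W i).
    move=> i hi; rewrite (XH i j) ?hi //; apply: H_lip => //; rewrite ?subnKC //.
    - exact: leq_ltn_trans hjj hmR.
    - exact: Xpos.
    - exact: tp_pos (Sw j hjj) (Sn j hjj).
    - by split => //; right; rewrite -hnXj.
  have key : forall i, i <= j -> nth 0 (W i) (n - k) = (nth 0 (X i) (n - k)).+1.
    move=> i hi; have [hp [e|e]] := lipi i hi; last by [].
    exfalso; apply: NU.
    have h1 : pref (n - k).+1 (X i) (W i) by apply/prefS; split.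
    have e0 : X 0 = H 0 i (X i) by rewrite (XH 0 i) ?subn0 // leq0n (leq_trans hi hjj).
    have e1 : H 0 j (tp n (S j)) = H 0 i (W i).
      by have := H_add 0 i (j - i) (tp n (S j)); rewrite add0n subnKC // => ->.
    rewrite e0; apply: pref_trans W0; rewrite e1; apply: H_pref => //; rewrite add0n.
    + exact: leq_ltn_trans (leq_trans hi hjj) hmR.
    + exact: Xpos (leq_trans hi hjj).
    + exact: Wpos.
  have W0e : W 0 = H 0 j (tp n (S j)) by rewrite /W subn0.
  have [hpXW0 _] := lipi 0 (leq0n j).
  have hp0 : pref (n - k) (X 0) (tp n (S 0)).
    apply: pref_trans hpXW0 _; rewrite W0e; apply: pref_le W0; exact: leqnSn.
  have hn0 : (nth 0 (X 0) (n - k)).+1 = nth 0 (tp n (S 0)) (n - k).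
    rewrite -key // W0e; by case/prefS: W0.
  have [p [hpop hIn hmem]] := pop_exists hk (Sw 0 (leq0n m)) (Sn 0 (leq0n m)) (Xpos 0 (leq0n m)) hp0 hn0.
  split.
    exists p; split => //.
    apply/(hist_isE (k - 1) _ _ eRc); split => // x.
    have hlast : last (nth c0 R 0) (behead R) = nth c0 R m.
      rewrite (last_nth c0) -eRc size_behead; congr nth; lia.
    rewrite hlast => hx.
    have hR : hist0 n delta R x = H 0 m x.
      by rewrite -hist_H ?add0n // drop0 take_oversize //; lia.
    rewrite hR.
    have [hxm hpx] := (top_mem x hk1n (Sw m (leqnn m)) (Sn m (leqnn m))).1 hx.
    rewrite ek1 in hpx.
    have hHx : H 0 m x \in pos (S 0) by apply: H_pos; rewrite add0n.
    have hpH : pref (n - k).+1 (H 0 m x) (X 0).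
      rewrite /X subn0; apply: H_pref; rewrite ?add0n //.
      exact: tp_pos (Sw m (leqnn m)) (Sn m (leqnn m)).
    apply: hmem => //.
      apply: pref_trans hp0; apply: pref_le hpH; exact: leqnSn.
    by case/prefS: hpH => _ ->.
  move=> i hi Ui.
  have him : i <= m by apply: ltnW.
  have hij : i <= j by rewrite -ltnS ej.
  have hXi := (Uk1 i him).1 Ui.
  have [hpXW _] := lipi i hij.
  have hWt : pref (n - k) (W i) (tp n (S i)).
    apply: pref_trans (pref_sym hpXW) _; apply: pref_le hXi; exact: leqnSn.
  have := top_max hk (Sw i him) (Sn i him) (Wpos i hij) hWt.
  rewrite key //; case/prefS: hXi => _ ->; by rewrite ltnn.
- by move/(_ Ujp).
Qed.

End Trace.

Lemma steps_nth n (G Q A : Type) (delta : Q -> G -> trans Q A G) (c c0 : config G Q) l :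
  steps n delta c l ->
  forall i, i.+1 < size (c :: l) -> succ n delta (nth c0 (c :: l) i) (nth c0 (c :: l) i.+1).
Proof.
elim: l c => [|c' l IH] c //= [h1 h2] [|i] hi //=.
exact: IH h2 i hi.
Qed.

Theorem mainTheorem7 (n : nat) (G Q A : finType)
  (delta : Q -> G -> trans Q A G)
  (Hinj : forall q g f, delta q g = TRead f -> injective f)
  (k : nat) (Hk : 1 <= k <= n)
  (R : seq (config G Q))
  (HR : is_run n delta R)
  (Hlen : 1 <= size R - 1)
  (Hnot : ~ upper n delta (k - 1) R)
  (Hex : exists j, j < size R - 1 /\ upper n delta k (subrun R j (size R - 1)))
  (Hgreat : forall j, j < size R - 1 ->
      upper n delta k (subrun R j (size R - 1)) ->
      (forall j', j < j' < size R - 1 -> ~ upper n delta k (subrun R j' (size R - 1))) ->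
      upper n delta (k - 1) (subrun R 0 j)) :
  kreturn n delta k R.
Proof.
have [c [l eR]] : exists c l, R = c :: l by case: R HR {Hlen Hnot Hex Hgreat} => [[]|c l _]; exists c, l.
have hwf : forall i, i < size R -> wfk n n (nth c R i).2 /\ nonempty (nth c R i).2.
  move=> i hi; move: HR; rewrite eR => -[_ hF].
  by apply: (Forall_nth (P := fun c => wfk n n c.2 /\ nonempty c.2)) => //; rewrite -eR.
have hsucc : forall i, i.+1 < size R -> succ n delta (nth c R i) (nth c R i.+1).
  move: HR; rewrite eR => -[hst _]; exact: steps_nth.
exact: (core hwf hsucc Hk Hlen Hnot Hex Hgreat).
Qed.
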